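(* Let $m\ge2$, $n=3^{2m}-1$, and for $0\le j\le 2m-1$ let $S_{1j}=\{-3^i(3^j(3^m+1)+1)\bmod n : 0\le i\le 2m-1\}\subseteq\mathbb Z/n\mathbb Z$, and $S_1=\bigcup_{j=0}^{2m-1}S_{1j}$. Then: (1) $|S_{1j}|=2m$ for every $0\le j\le 2m-1$; (2) for $0\le j_1\ne j_2\le 2m-1$, either $S_{1j_1}\cap S_{1j_2}=\varnothing$ or $S_{1j_1}=S_{1j_2}$, and the latter holds if and only if $j_1\equiv j_2+m\pmod{2m}$; (3) $|S_1|=2m^2$. *)

(* Defs.v *)
From mathcomp Require Import all_boot all_algebra.
Set Implicit Arguments. Unset Strict Implicit. Unset Printing Implicit Defensive.
Import GRing.Theory.
Local Open Scope ring_scope.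

(* n = 3^(2m) - 1 ; Z/nZ is 'Z_n (fine since m >= 2 gives n >= 2). *)
Definition nn (m : nat) : nat := (3 ^ (2 * m) - 1)%N.

Definition S1j (m j : nat) : {set 'Z_(nn m)} :=
  [set (- ((3 ^ i * (3 ^ j * (3 ^ m + 1) + 1))%N%:R : 'Z_(nn m))) | i : 'I_(2 * m)].

Definition S1 (m : nat) : {set 'Z_(nn m)} := \bigcup_(j < 2 * m) S1j m j.

(* Main.v *)
Require Import Defs.
From mathcomp Require Import all_boot all_algebra.
From mathcomp Require Import ring zify.


Lemma modcancel (k d x y : nat) : coprime k d -> k * x = k * y %[mod d] -> x = y %[mod d].
Proof.
move=> cop.
wlog le: x y / x <= y.
  move=> H; case/orP: (leq_total x y) => h; first exact: H.
  by move=> e; apply/esym/H.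
move/eqP; rewrite eq_sym eqn_mod_dvd ?leq_mul2l ?le ?orbT // -mulnBr Gauss_dvdr.
  by move=> hd; apply/eqP; rewrite eq_sym eqn_mod_dvd.
by rewrite coprime_sym.
Qed.

Lemma cop3p (m k : nat) : 0 < m -> coprime (3 ^ k) (3 ^ m + 1).
Proof.
move=> hm; apply: coprimeXl; rewrite prime_coprime //.
by rewrite dvdn_addr ?dvdn_exp.
Qed.

Lemma cop3m (m k : nat) : 0 < m -> coprime (3 ^ k) (3 ^ m - 1).
Proof.
move=> hm; apply: coprimeXl; rewrite prime_coprime //.
apply/negP => h.
have h3 : 3 %| 3 ^ m by rewrite dvdn_exp.
have : 3 %| 3 ^ m - (3 ^ m - 1) by rewrite dvdn_sub.
have -> : 3 ^ m - (3 ^ m - 1) = 1.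
  have : 0 < 3 ^ m by rewrite expn_gt0.
  lia.
by [].
Qed.

Lemma powlt (m d : nat) : d < m -> 3 ^ d + 2 <= 3 ^ m.
Proof.
move=> h.
have e : 3 ^ m = 3 * 3 ^ m.-1 by rewrite -expnS prednK //; lia.
have : 3 ^ d <= 3 ^ m.-1 by rewrite leq_exp2l //; lia.
have : 0 < 3 ^ m.-1 by rewrite expn_gt0.
lia.
Qed.

Lemma pow_eq1 d : 3 ^ d = 1 -> d = 0.
Proof. by move=> e; apply/eqP; rewrite -(eqn_exp2l _ _ (isT : 1 < 3)) e. Qed.

Lemma pow_p1 (m d : nat) : 0 < m -> 0 < d -> d < 2 * m -> 3 ^ d = 1 %[mod 3 ^ m + 1] -> False.
Proof.
move=> hm hd hd2 e.
case: (ltnP d m) => h.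
  have s1 : 3 ^ d < 3 ^ m + 1 by have := powlt _ _ h; lia.
  have s2 : 1 < 3 ^ m + 1 by have := powlt _ _ hm; rewrite expn0; lia.
  move: e; rewrite !modn_small // => /pow_eq1; lia.
have de : d = m + (d - m) by lia.
set k := d - m in de.
have hk : k < m by lia.
have e2 : 3 ^ d + 3 ^ k = 3 ^ k * (3 ^ m + 1) by rewrite de expnD; ring.
have : (1 + 3 ^ k) %% (3 ^ m + 1) = 0.
  by rewrite -modnDml -e modnDml e2 modnMl.
rewrite modn_small.
  lia.
have := powlt _ _ hk; lia.
Qed.

Lemma pow_m1_small (m d : nat) : d < m -> 3 ^ d = 1 %[mod 3 ^ m - 1] -> d = 0.
Proof.
move=> h.
have s1 : 3 ^ d < 3 ^ m - 1 by have := powlt _ _ h; lia.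
have p0 : 0 < 3 ^ d by rewrite expn_gt0.
have s2 : 1 < 3 ^ m - 1 by have := powlt _ _ h; lia.
by rewrite !modn_small // => /pow_eq1.
Qed.
Lemma pow_m1 (m d : nat) : 0 < m -> d < 2 * m -> 3 ^ d = 1 %[mod 3 ^ m - 1] -> d = 0 \/ d = m.
Proof.
move=> hm hd2 e.
case: (ltnP d m) => h; first by left; exact: (pow_m1_small _ _ h e).
have de : d = m + (d - m) by lia.
set k := d - m in de.
have hk : k < m by lia.
right.
have : k = 0.
  apply: (pow_m1_small _ _ hk).
  rewrite -e de expnD -modnMml.
  have p0 : 0 < 3 ^ m by rewrite expn_gt0.
  have e3 : 3 ^ m %% (3 ^ m - 1) = 1 %% (3 ^ m - 1).
    set a := 3 ^ m - 1.
    have -> : 3 ^ m = a + 1 by rewrite /a; lia.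
    by rewrite modnDl.
  by rewrite e3 modnMml mul1n.
lia.
Qed.

Definition V (m i j : nat) := 3 ^ i * (3 ^ j * (3 ^ m + 1) + 1).

Lemma Vform m i j : V m i j = (3 ^ i * 3 ^ j) * (3 ^ m + 1) + 3 ^ i.
Proof. rewrite /V; ring. Qed.

Lemma nnE m : (3 ^ (2 * m) - 1) = (3 ^ m - 1) * (3 ^ m + 1).
Proof. by rewrite mulnC expnM -subn_sqr exp1n -expnM mulnC. Qed.

Lemma powinj_p m i i' : 0 < m -> i < 2 * m -> i' < 2 * m ->
  3 ^ i = 3 ^ i' %[mod 3 ^ m + 1] -> i = i'.
Proof.
move=> hm.
wlog le: i i' / i <= i'.
  move=> H h1 h2 e; case/orP: (leq_total i i') => h; first exact: H.
  by apply/esym/H => //.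
move=> h1 h2 e.
have de : i' = i + (i' - i) by lia.
set d := i' - i in de.
case: (posnP d) => hd; first lia.
exfalso; apply: (pow_p1 m d hm hd); first lia.
apply: (@modcancel _ _ _ _ (cop3p m i hm)).
by rewrite muln1 -expnD -de e.
Qed.

Lemma powinj_m m j j' : 0 < m -> j < 2 * m -> j' < 2 * m ->
  3 ^ j = 3 ^ j' %[mod 3 ^ m - 1] -> j = j' \/ j = j' + m \/ j' = j + m.
Proof.
move=> hm.
wlog le: j j' / j <= j'.
  move=> H h1 h2 e; case/orP: (leq_total j j') => h; first exact: H.
  have := H j' j h h2 h1 (esym e); lia.
move=> h1 h2 e.
have de : j' = j + (j' - j) by lia.
set d := j' - j in de.
have : d = 0 \/ d = m.
  apply: (pow_m1 m d hm); first lia.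
  apply: (@modcancel _ _ _ _ (cop3m m j hm)).
  by rewrite muln1 -expnD -de e.
lia.
Qed.

Lemma key m i i' j j' : 0 < m -> i < 2 * m -> i' < 2 * m -> j < 2 * m -> j' < 2 * m ->
  V m i j = V m i' j' %[mod 3 ^ (2 * m) - 1] -> i = i' /\ (j = j' \/ j = j' + m \/ j' = j + m).
Proof.
move=> hm hi hi' hj hj' e.
have ei : i = i'.
  apply: (powinj_p m i i' hm hi hi').
  have hd : 3 ^ m + 1 %| 3 ^ (2 * m) - 1 by rewrite nnE dvdn_mull.
  have := congr1 (modn ^~ (3 ^ m + 1)) e; by rewrite /= !(modn_dvdm _ hd) !Vform !modnMDl.
subst i'; split => //.
apply: (powinj_m m j j' hm hj hj').
move: e; rewrite !Vform => /eqP.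
rewrite eqn_modDr nnE -!muln_modl => /eqP /eqP; rewrite eqn_pmul2r ?addn1 // => /eqP.
exact: (@modcancel _ _ _ _ (cop3m m i hm)).
Qed.

Lemma shift m i j : V m i (j + m) = V m i j %[mod 3 ^ (2 * m) - 1].
Proof.
have p0 : 0 < 3 ^ m by rewrite expn_gt0.
have e : 3 ^ m * (3 ^ m + 1) = (3 ^ m + 1) + (3 ^ (2 * m) - 1).
  rewrite nnE; set a := 3 ^ m; have : 0 < a by []. nia.
have -> : V m i (j + m) = V m i j + (3 ^ i * 3 ^ j) * (3 ^ (2 * m) - 1).
  rewrite /V expnD -mulnA e; ring.
by rewrite addnC modnMDl.
Qed.

Lemma modhelp m j1 j2 : j1 < 2 * m -> j2 < 2 * m ->
  (j1 = j2 + m %[mod 2 * m]) <-> (j1 = j2+m \/ j2 = j1+m).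
Proof.
move=> h1 h2; rewrite (modn_small h1); split.
  case: (ltnP j2 m) => h.
    by rewrite modn_small; [left | lia].
  have -> : j2 + m = (j2 - m) + 2 * m by lia.
  rewrite modnDr modn_small; lia.
case=> e; subst.
  by rewrite modn_small //.
have -> : j1 + m + m = j1 + 2 * m by lia.
by rewrite modnDr modn_small //; lia.
Qed.

Lemma Feq m i j i' j' : 1 < nn m ->
  (- ((V m i j)%:R : 'Z_(nn m)) = - ((V m i' j')%:R))%R <-> V m i j = V m i' j' %[mod nn m].
Proof.
move=> h; split.
  by move=> e; have := congr1 val (GRing.oppr_inj e); rewrite /= !(val_Zp_nat h).
by move=> e; congr (- _)%R; apply: val_inj; rewrite /= !(val_Zp_nat h).
Qed.

Theorem lemma3p17 (m : nat) (hm : (2 <= m)%N) :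
  (forall j : nat, (j < 2 * m)%N -> #|S1j m j| = (2 * m)%N) /\
  (forall j1 j2 : nat, (j1 < 2 * m)%N -> (j2 < 2 * m)%N -> j1 <> j2 ->
     (S1j m j1 :&: S1j m j2 = set0 \/ S1j m j1 = S1j m j2) /\
     (S1j m j1 = S1j m j2 <-> j1 = j2 + m %[mod 2 * m])) /\
  #|S1 m| = (2 * m ^ 2)%N.
Proof.
have m0 : 0 < m by lia.
have m02 : 0 < 2 * m by lia.
have n1 : 1 < nn m.
  have : 9 <= 3 ^ (2 * m) by rewrite (_ : 9 = 3 ^ 2) // leq_exp2l //; lia.
  rewrite /nn; lia.
pose F i j := (- ((V m i j)%:R : 'Z_(nn m)))%R.
have S1jE j : S1j m j = [set F i j | i : 'I_(2 * m)] by [].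
have hF i i' j j' : i < 2 * m -> i' < 2 * m -> j < 2 * m -> j' < 2 * m ->
    F i j = F i' j' -> i = i' /\ (j = j' \/ j = j' + m \/ j' = j + m).
  by move=> hi hi' hj hj' /(Feq _ _ _ _ _ n1); apply: key.
have shiftF i j : F i (j + m) = F i j by apply/(Feq _ _ _ _ _ n1); apply: shift.
split.
  move=> j hj; rewrite S1jE card_imset ?card_ord //.
  move=> i i' /hF [] // ei _; exact: val_inj.
split.
  have A j1 j2 x : j1 < 2 * m -> j2 < 2 * m -> x \in S1j m j1 -> x \in S1j m j2 ->
      j1 = j2 \/ j1 = j2 + m \/ j2 = j1 + m.
    move=> h1 h2 /imsetP [i _ ->] /imsetP [i' _ e].
    by case: (hF _ _ _ _ (ltn_ord i) (ltn_ord i') h1 h2 e).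
  have B j1 j2 : j1 = j2 + m -> S1j m j1 = S1j m j2.
    move=> ->; apply/setP => x; rewrite !S1jE.
    by apply/imsetP/imsetP => [[i _ ->]|[i _ ->]]; exists i => //; rewrite shiftF.
  move=> j1 j2 h1 h2 hne; rewrite modhelp //.
  have C : (j1 = j2 + m \/ j2 = j1 + m) -> S1j m j1 = S1j m j2.
    by case=> e; [exact: B | symmetry; exact: B].
  split.
    case: (set_0Vmem (S1j m j1 :&: S1j m j2)) => [->|[x hx]]; [by left|right].
    move: hx; rewrite inE => /andP [x1 x2]; apply: C.
    have := A _ _ _ h1 h2 x1 x2; lia.
  split; last exact: C.
  move=> eq.
  have x1 : F 0 j1 \in S1j m j1 by apply/imsetP; exists (Ordinal m02).
  have x2 : F 0 j1 \in S1j m j2 by rewrite -eq.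
  have := A _ _ _ h1 h2 x1 x2; lia.
have -> : S1 m = [set F p.1 p.2 | p : 'I_(2 * m) * 'I_m].
  apply/setP => x; apply/bigcupP/imsetP.
    case=> j _ /imsetP [i _ ->]; case: (ltnP j m) => hj.
      by exists (i, Ordinal hj).
    have hj' : j - m < m by have := ltn_ord j; lia.
    exists (i, Ordinal hj') => //=.
    rewrite -shiftF; congr F; lia.
  case=> [[i j]] _ ->.
  have hj : j < 2 * m by have := ltn_ord j; lia.
  exists (Ordinal hj) => //; apply/imsetP; exists i => //.
rewrite card_imset ?card_prod ?card_ord; first by rewrite -mulnA mulnn.
move=> [i j] [i' j'] /= /hF [] //; first by have := ltn_ord j; lia.
  by have := ltn_ord j'; lia.
move=> ei hj; have ej : nat_of_ord j = j' by have := ltn_ord j; have := ltn_ord j'; lia.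
by congr pair; apply: val_inj.
Qed.
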